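(* Let $\mathbb{X}$ be a two-dimensional real Banach space, let $z\in\mathbb{X}$ with $z\neq 0$, and let $\epsilon\in[0,1)$. Then $\overline{B}(z,\epsilon)\cap S_{\mathbb{X}}$ is either empty or path connected.
   Context: $\overline{B}(z,\epsilon)=\{w\in\mathbb{X}:\|w-z\|\leq\epsilon\}$ and $S_{\mathbb{X}}$ is the unit sphere of $\mathbb{X}$. *)

(* Defs.v *)
From HB Require Import structures.
From mathcomp Require Import all_boot all_order all_algebra.
From mathcomp Require Import all_classical all_reals all_analysis.
Set Implicit Arguments. Unset Strict Implicit. Unset Printing Implicit Defensive.
Import Order.TTheory GRing.Theory Num.Theory.
Import numFieldNormedType.Exports.
Local Open Scope classical_set_scope.
Local Open Scope ring_scope.

Definition two_dimensional (R : realType) (X : normedModType R) : Prop :=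
  exists e1 e2 : X,
    (forall a b : R, a *: e1 + b *: e2 = 0 -> a = 0 /\ b = 0) /\
    (forall x : X, exists a b : R, x = a *: e1 + b *: e2).

Definition cball (R : realType) (X : normedModType R) (z : X) (eps : R) : set X :=
  [set w | `|w - z| <= eps].

Definition usphere (R : realType) (X : normedModType R) : set X :=
  [set w | `|w| = 1].

Definition path_connected (R : realType) (X : normedModType R) (A : set X) : Prop :=
  forall x y, A x -> A y ->
    exists f : R -> X,
      {within `[0, 1]%classic, continuous f} /\
      f 0 = x /\ f 1 = y /\ f @` `[0, 1]%classic `<=` A.

(* Main.v *)
Require Import Defs.
From HB Require Import structures.
From mathcomp Require Import all_boot all_order all_algebra.
From mathcomp Require Import all_classical all_reals all_analysis.
From mathcomp Require Import ring lra.
Import Order.TTheory GRing.Theory Num.Theory.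
Import numFieldNormedType.Exports.
Local Open Scope classical_set_scope.
Local Open Scope ring_scope.
Ltac linnorm x z :=
  let C := fresh "C" in
  let DC := fresh "DC" in let NC := fresh "NC" in let ZC := fresh "ZC" in
  let eCx := fresh "eCx" in let eCz := fresh "eCz" in
  pose C := fun a b => a *: x + b *: z;
  assert (DC : forall a b c d, C a b + C c d = C (a+c) (b+d))
    by (intros; rewrite /C addrACA -!scalerDl; reflexivity);
  assert (NC : forall a b, - C a b = C (-a) (-b))
    by (intros; rewrite /C opprD -!scaleNr; reflexivity);
  assert (ZC : forall k a b, k *: C a b = C (k*a) (k*b))
    by (intros; rewrite /C scalerDr !scalerA; reflexivity);
  assert (eCx : x = C 1 0) by (rewrite /C scale1r scale0r addr0; reflexivity);
  assert (eCz : z = C 0 1) by (rewrite /C scale1r scale0r add0r; reflexivity);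
  rewrite ?[in LHS]eCx ?[in LHS]eCz ?[in RHS]eCx ?[in RHS]eCz;
  rewrite ?(ZC, NC, DC) ; clear DC NC ZC eCx eCz.

Lemma cone_le (R : realType) (X : normedModType R) (x z q : X) (g d : R) :
  `|x| = 1 -> `|q| = 1 -> 0 <= g -> 0 <= d -> q = g *: x + d *: z ->
  `|q - z| <= `|x - z|.
Proof.
move=> nx nq g0 d0 qE.
have hz : `|z| <= `|x - z| + 1.
  have := ler_normB x (x - z). by rewrite opprB addrC subrK nx addrC.
have nN := normr_ge0 (x - z).
have nz := normr_ge0 z.
case: (leP 1 (g + d)) => hgd.
- have gd0 : 0 < g + d by lra.
  set m := (g + d)^-1.
  have m0 : 0 < m by rewrite invr_gt0.
  have m1 : m <= 1 by rewrite invf_le1.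
  have mgd : m * g + m * d = 1 by rewrite -mulrDr mulVf //; lra.
  have h1 : m *: q - z = (m * g) *: (x - z).
    rewrite qE; linnorm x z; congr (C _ _); lra.
  have h2 : x - m *: q = (1 - m * g) *: (x - z).
    rewrite qE; linnorm x z; congr (C _ _); lra.
  have e1 : `|q - z| <= (1 - m) + m * g * `|x - z|.
    have -> : q - z = (1 - m) *: q + (m *: q - z).
      by rewrite scalerBl scale1r addrA subrK.
    rewrite h1; apply: le_trans (ler_normD _ _) _.
    rewrite !normrZ nq mulr1 !ger0_norm //; nra.
  have e2 : `|x| <= (1 - m * g) * `|x - z| + m.
    have {1}-> : x = (x - m *: q) + m *: q by rewrite subrK.
    rewrite h2; apply: le_trans (ler_normD _ _) _.
    rewrite !normrZ nq mulr1 !ger0_norm //; nra.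
  nra.
- have h1 : q - z = g *: (x - z) + (g + d - 1) *: z.
    rewrite qE; linnorm x z; congr (C _ _); lra.
  have e1 : `|q - z| <= g * `|x - z| + (1 - g - d) * `|z|.
    rewrite h1; apply: le_trans (ler_normD _ _) _.
    rewrite !normrZ (ger0_norm g0) (ler0_norm (_ : g + d - 1 <= 0)); last by lra.
    by rewrite opprB opprD addrA.
  have e2 : 1 <= g + d * `|z|.
    rewrite -nq qE; apply: le_trans (ler_normD _ _) _.
    rewrite !normrZ nx mulr1 !ger0_norm //.
  nra.
Qed.

Lemma key (R : realType) (X : normedModType R) (x y z q : X) (al be a b e : R) :
  `|x| = 1 -> `|y| = 1 -> `|q| = 1 -> `|x - z| <= e -> `|y - z| <= e -> e < 1 ->
  0 <= al -> 0 <= be -> q = al *: x + be *: y -> z = a *: x + b *: y ->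
  `|q - z| <= e.
Proof.
move=> nx ny nq hx hy e1 al0 be0 qE zE.
case: (boolP ((0 < b) && (a * be <= al * b))) => [/andP[b0 hab]|nab].
  apply: le_trans hx.
  apply: (@cone_le R X x z q (al - a * be / b) (be / b)) => //.
  - by rewrite subr_ge0 ler_pdivrMr.
  - by rewrite divr_ge0 // ltW.
  rewrite qE zE; linnorm x y; congr (C _ _); field; lra.
case: (boolP ((0 < a) && (b * al <= be * a))) => [/andP[a0 hab]|nba].
  apply: le_trans hy.
  apply: (@cone_le R X y z q (be - b * al / a) (al / a)) => //.
  - by rewrite subr_ge0 ler_pdivrMr.
  - by rewrite divr_ge0 // ltW.
  rewrite qE zE; linnorm x y; congr (C _ _); field; lra.
have a0 : a <= 0.
  rewrite leNgt; apply/negP => a0.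
  move: nba; rewrite a0 /= -ltNge => h.
  have b0 : 0 < b by nra.
  move: nab; rewrite b0 /= -ltNge => h'. nra.
have b0 : b <= 0.
  rewrite leNgt; apply/negP => b0.
  move: nab; rewrite b0 /= -ltNge => h.
  have a0' : 0 < a by nra.
  lra.
exfalso.
have E1 : (1 - a - b) *: x = (1 - b) *: (x - z) + b *: (y - z).
  rewrite zE; linnorm x y; congr (C _ _); ring.
have E2 : (1 - a - b) *: y = (1 - a) *: (y - z) + a *: (x - z).
  rewrite zE; linnorm x y; congr (C _ _); ring.
have n1 : 1 - a - b <= (1 - b) * e + (- b) * e.
  have := ler_normD ((1 - b) *: (x - z)) (b *: (y - z)).
  rewrite -E1 !normrZ nx mulr1 (ger0_norm (_ : 0 <= 1 - a - b)); last by lra.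
  rewrite (ger0_norm (_ : 0 <= 1 - b)); last by lra.
  rewrite (ler0_norm b0) => h. apply: le_trans h _.
  apply: lerD; apply: ler_wpM2l => //; lra.
have n2 : 1 - a - b <= (1 - a) * e + (- a) * e.
  have := ler_normD ((1 - a) *: (y - z)) (a *: (x - z)).
  rewrite -E2 !normrZ ny mulr1 (ger0_norm (_ : 0 <= 1 - a - b)); last by lra.
  rewrite (ger0_norm (_ : 0 <= 1 - a)); last by lra.
  rewrite (ler0_norm a0) => h. apply: le_trans h _.
  apply: lerD; apply: ler_wpM2l => //; lra.
nra.
Qed.

Lemma antip (R : realType) (X : normedModType R) (x y z : X) (e : R) :
  `|x| = 1 -> `|x - z| <= e -> `|y - z| <= e -> e < 1 -> y = - x -> False.
Proof.
move=> nx hx hy e1 yE.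
have := ler_normB (x - z) (y - z).
rewrite opprB addrA subrK yE opprK -mulr2n -scaler_nat normrZ nx mulr1.
rewrite ger0_norm ?ler0n // => h. 
rewrite yE in hy; lra.
Qed.

Lemma pnz (R : realType) (X : normedModType R) (x y z : X) (e t : R) :
  `|x| = 1 -> `|y| = 1 -> `|x - z| <= e -> `|y - z| <= e -> e < 1 ->
  0 < `|(1 - t) *: x + t *: y|.
Proof.
move=> nx ny hx hy e1.
rewrite normr_gt0; apply/negP => /eqP h.
have h2 : (1 - t) *: x = - (t *: y) by apply/eqP; rewrite -addr_eq0 h.
have h3 : `|1 - t| = `|t|.
  by have := congr1 (fun v => `|v|) h2; rewrite /= normrN !normrZ nx ny !mulr1.
have t2 : t = 2^-1.
  move: h3; case: (lerP 0 t) => t0; case: (lerP 0 (1 - t)) => t1;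
  rewrite ?(ger0_norm t0) ?(ltr0_norm t0) ?(ger0_norm t1) ?(ltr0_norm t1) => h3; 
  try (field; lra); lra.
move: h2; rewrite t2 (_ : 1 - 2^-1 = 2^-1 :> R); last by field.
move=> /(congr1 (fun v => 2 *: v)); rewrite scalerN !scalerA mulfV ?pnatr_eq0 // !scale1r.
move=> xE; exact: (@antip _ _ y x z e ny hy hx e1 xE).
Qed.

Lemma span2 (R : realType) (X : normedModType R) (hX : two_dimensional X) (x y z : X) (e : R) :
  `|x| = 1 -> `|y| = 1 -> `|x - z| <= e -> `|y - z| <= e -> e < 1 ->
  x = y \/ exists a b : R, z = a *: x + b *: y.
Proof.
move=> nx ny hx hy e1.
have [e1' [e2 [_ sp]]] := hX.
have [x1 [x2 xE]] := sp x.
have [y1 [y2 yE]] := sp y.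
have [z1 [z2 zE]] := sp z.
case: (eqVneq (x1 * y2 - x2 * y1) 0) => det.
- left.
  have h1 : y2 *: x = x2 *: y.
    apply/eqP; rewrite -subr_eq0; apply/eqP.
    have -> : (0 : X) = 0 *: e1' + 0 *: e2 by rewrite !scale0r addr0.
    rewrite xE yE; linnorm e1' e2; congr (C _ _); lra.
  have h2 : y1 *: x = x1 *: y.
    apply/eqP; rewrite -subr_eq0; apply/eqP.
    have -> : (0 : X) = 0 *: e1' + 0 *: e2 by rewrite !scale0r addr0.
    rewrite xE yE; linnorm e1' e2; congr (C _ _); lra.
  have [l yl] : exists l : R, y = l *: x.
    case: (eqVneq x1 0) => x10.
    + case: (eqVneq x2 0) => x20.
        exfalso; move: nx; rewrite xE x10 x20 !scale0r addr0 normr0.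
        by move/eqP; rewrite eq_sym oner_eq0.
      exists (y2 / x2); rewrite (mulrC y2) -scalerA h1 scalerA mulVf ?scale1r //.
    + exists (y1 / x1); rewrite (mulrC y1) -scalerA h2 scalerA mulVf ?scale1r //.
  have l1 : `|l| = 1 by move: ny; rewrite yl normrZ nx mulr1.
  case: (lerP 0 l) => l0.
  + by rewrite yl -[l](ger0_norm l0) l1 scale1r.
  + exfalso; apply: (@antip _ _ x y z e nx hx hy e1).
    by rewrite yl -[l]opprK -[-l](ltr0_norm l0) l1 scaleN1r.
- right.
  exists ((z1 * y2 - z2 * y1) / (x1 * y2 - x2 * y1)).
  exists ((x1 * z2 - x2 * z1) / (x1 * y2 - x2 * y1)).
  rewrite zE xE yE; linnorm e1' e2; congr (C _ _); field; exact: det.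
Qed.

Theorem lemma2p1 (R : realType) (X : completeNormedModType R)
  (hX : two_dimensional X) (z : X) (hz : z != 0) (eps : R)
  (heps0 : 0 <= eps) (heps1 : eps < 1) :
  cball z eps `&` @usphere R X = set0 \/ path_connected (cball z eps `&` @usphere R X).
Proof.
right. move=> x y [hx nx] [hy ny].
rewrite /cball /usphere /= in hx nx hy ny.
pose p t := (1 - t) *: x + t *: y.
have pn t : 0 < `|p t| := @pnz R X x y z eps t nx ny hx hy heps1.
pose f t := `|p t|^-1 *: p t.
have nf t : `|f t| = 1.
  by rewrite /f normrZ normfV normr_id mulVf // lt0r_neq0.
exists f; split.
  apply: continuous_subspaceT => t.
  have pc : continuous p.
    move=> s; rewrite /p; apply: cvgD; apply: cvgZ; try exact: cvg_cst.
    - apply: cvgB; [exact: cvg_cst | exact: cvg_id].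
    - exact: cvg_id.
  apply: cvgZ; last exact: pc.
  apply: cvgV; first by rewrite lt0r_neq0.
  apply: cvg_norm; exact: pc.
split.
  by rewrite /f /p subr0 scale1r scale0r addr0 nx invr1 scale1r.
split.
  by rewrite /f /p subrr scale0r scale1r add0r ny invr1 scale1r.
move=> _ [t ht <-].
have [t0 t1] : 0 <= t /\ t <= 1.
  by move: ht; rewrite /= in_itv /= => /andP[].
split; last by rewrite /usphere /=.
rewrite /cball /=.
case: (@span2 R X hX x y z eps nx ny hx hy heps1) => [xy | [a [b zE]]].
  have -> : f t = x.
    rewrite /f /p -xy -scalerDl subrK scale1r nx invr1 scale1r //.
  exact: hx.
apply: (@key _ _ x y z (f t) ((1 - t) / `|p t|) (t / `|p t|) a b eps) => //.
- by rewrite divr_ge0 // ?subr_ge0.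
- by rewrite divr_ge0.
- by rewrite /f /p scalerDr !scalerA !(mulrC (`|_|^-1)).
Qed.
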